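(* Let $\mathbf{D}\in\mathbb{R}^{N\times N}$, $\mathbf{H}\in\mathbb{R}^{N\times L}$, $\mathbf{A}\in\mathbb{R}^{m\times N}$ with $m<N$, and consider the system $\mathbf{x}_k=\mathbf{D}\mathbf{x}_{k-1}+\mathbf{H}\mathbf{h}_k$, $\mathbf{y}_k=\mathbf{A}\mathbf{x}_k$, with unconstrained inputs $\mathbf{h}_k\in\mathbb{R}^L$. If the system is output controllable, then for all $\lambda\in\mathbb{C}$ the matrix $\mathbf{A}\begin{bmatrix}\lambda\mathbf{I}-\mathbf{D} & \mathbf{H}\end{bmatrix}\in\mathbb{C}^{m\times(N+L)}$ has rank $m$.
   Context: The system is output controllable if for every initial state $\mathbf{x}_0\in\mathbb{R}^N$ and every desired output $\mathbf{y}\in\mathbb{R}^m$ there exist a finite $K$ and inputs $\mathbf{h}_1,\dots,\mathbf{h}_K\in\mathbb{R}^L$ such that $\mathbf{y}_K=\mathbf{A}\mathbf{x}_K=\mathbf{y}$. *)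

(* Defs.v *)
(* Reals are modelled by an arbitrary real closed field R
   (the standard reals are an instance); complex numbers by R[i]. *)
From HB Require Import structures.
From mathcomp Require Import all_boot all_order all_algebra.
From mathcomp Require Export complex.
Set Implicit Arguments. Unset Strict Implicit. Unset Printing Implicit Defensive.
Import Order.TTheory GRing.Theory Num.Theory.
Local Open Scope ring_scope.

(* State trajectory of x_k = D x_{k-1} + H h_k, starting at x_0,
   driven by the input sequence h (only h 1, h 2, ... are used). *)
Fixpoint state (R : pzRingType) (N L : nat) (D : 'M[R]_N) (H : 'M[R]_(N, L))
  (x0 : 'cV[R]_N) (h : nat -> 'cV[R]_L) (k : nat) : 'cV[R]_N :=
  match k with
  | 0 => x0
  | k'.+1 => D *m state D H x0 h k' + H *m h k'.+1
  end.

Definition output_controllable (R : pzRingType) (m N L : nat)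
  (D : 'M[R]_N) (H : 'M[R]_(N, L)) (A : 'M[R]_(m, N)) : Prop :=
  forall (x0 : 'cV[R]_N) (y : 'cV[R]_m),
    exists (K : nat) (h : nat -> 'cV[R]_L), A *m state D H x0 h K = y.

(* Main.v *)
Require Import Defs.
From HB Require Import structures.
From mathcomp Require Import all_boot all_order all_algebra.
From mathcomp Require Import complex.
Import Order.TTheory GRing.Theory Num.Theory.
Local Open Scope ring_scope.

Theorem proposition1 (R : rcfType) (m N L : nat)
  (D : 'M[R]_N) (H : 'M[R]_(N, L)) (A : 'M[R]_(m, N)) :
  (m < N)%N ->
  output_controllable D H A ->
  forall lambda : R[i],
    \rank (map_mx (real_complex R) A
           *m row_mx (lambda%:M - map_mx (real_complex R) D)
                     (map_mx (real_complex R) H)) = m.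
Proof.
move=> _ oc lambda.
set rc := real_complex R.
set M := (map_mx rc A *m _).
suff key : forall w : 'rV[R[i]]_m, w *m M = 0 -> w = 0.
  apply/eqP; change (row_free M); rewrite -kermx_eq0; apply/eqP/row_matrixP => i.
  rewrite row0; apply: key.
  by apply/sub_kermxP; rewrite row_sub.
move=> w; rewrite /M mulmxA mul_mx_row -row_mx0 => /eq_row_mx [h1 h2].
set v := w *m map_mx rc A in h1 h2.
have hD : v *m map_mx rc D = lambda *: v.
  by apply/eqP; rewrite eq_sym -subr_eq0 -mul_mx_scalar -mulmxBr h1.
have st : forall h k, v *m map_mx rc (state D H 0 h k) = 0.
  move=> h; elim=> [|k IH] /=; first by rewrite map_mx0 mulmx0.
  rewrite map_mxD !map_mxM mulmxDr !mulmxA h2 mul0mx addr0 hD.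
  by rewrite -scalemxAl IH scaler0.
have hy : forall y : 'cV[R]_m, w *m map_mx rc y = 0.
  move=> y; have [K [h <-]] := oc 0 y.
  by rewrite map_mxM mulmxA st.
have -> : w = w *m map_mx rc 1%:M by rewrite map_mx1 mulmx1.
apply/matrixP => k j; rewrite (ord1 k).
have := congr1 (fun X : 'M[R[i]]_(1,1) => X 0 0) (hy (col j 1%:M)).
rewrite map_col colE mulmxA -colE mxE.
by move=> ->; rewrite !mxE.
Qed.
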